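(* Let $G$ be a graph, $R$ a connected subset of $V(G)$, $s_R\in R$, and let $\mathcal{P}$ be an $R$-shortest path collection. Then for all $u_1,u_2\in U_{\mathcal{P}}$, if $\widehat{\operatorname{prof}}_{R,\mathcal{P}}[u_1]=\widehat{\operatorname{prof}}_{R,\mathcal{P}}[u_2]$ then $\operatorname{prof}_{R,s_R}[u_1]=\operatorname{prof}_{R,s_R}[u_2]$.
   Context: $G$ is an unweighted undirected graph with shortest-path distance $\mathrm{dist}$, and $\mathrm{dist}(v,R)=\min_{y\in R}\mathrm{dist}(v,y)$; $R$ is connected if $G[R]$ is connected. $|Q|$ is the number of edges of a path $Q$, $P[a,b]$ the subpath between $a$ and $b$. For $z\in V(G)$ and $x\in R$, the distance profile $\operatorname{prof}_{R,x}[z]\colon R\to\mathbb{Z}$ is $\operatorname{prof}_{R,x}[z](s)=\mathrm{dist}(z,s)-\mathrm{dist}(z,x)$. Milestones: for a path $P$ from a vertex $v^P$ to a vertex $x^P\in R$ with $|P|=\mathrm{dist}(v^P,R)$, order $V(P)$ from $v^P$ towards $x^P$; $v\in V(P)$ is a milestone of $P$ if $v=x^P$ or $\operatorname{prof}_{R,x^P}[v]\ne \operatorname{prof}_{R,x^P}[u]$ where $u$ is the next vertex after $v$ towards $x^P$. An $R$-shortest path collection is a collection $\mathcal{P}$ of paths in $G$ such that every $P\in\mathcal{P}$ is a path from some $v^P\in V(G)$ to some $x^P\in R$ with $|P|=\mathrm{dist}(v^P,R)$, and $R\subseteq\bigcup_{P\in\mathcal{P}}V(P)$. Let $H_{\mathcal{P}}$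 be the union of the paths of $\mathcal{P}$. A vertex is an anchor vertex if it has degree more than two in $H_{\mathcal{P}}$ or it is a milestone of some $P\in\mathcal{P}$; $A_R(\mathcal{P})$ is the set of anchor vertices. For $P\in\mathcal{P}$ and an anchor $w\in V(P)$, the prefix of $w$ in $P$ is the vertex set of the maximal subpath $Q$ of $P[v^P,w]$ such that $w$ is the only anchor vertex of $P$ in $Q$. Let $U_{\mathcal{P}}=V(G)\setminus\bigcup_{P\in\mathcal{P}}V(P)$. For $u\in U_{\mathcal{P}}$ and $w\in A_R(\mathcal{P})$, define $\widehat{\mathrm{dist}}(u,w)=\min\{|Q_{u,z}|+|P[z,w]| : P\in\mathcal{P},\ w\in V(P),\ z \text{ in the prefix of } w \text{ in } P\}$, where $Q_{u,z}$ is a shortest path among the paths from $u$ to $z$ all of whose internal vertices lie in $U_{\mathcal{P}}$ (terms for which no such path exists are omitted, and $\widehat{\mathrm{dist}}(u,w)=\infty$ if no term remains). The anchor-distance profile is $\operatorname{prof}^*_{R,\mathcal{P}}[u](w)=\widehat{\mathrm{dist}}(u,w)+\mathrm{dist}(w,R)-\mathrm{dist}(u,R)$ for $w\in A_R(\mathcal{P})$, and $\widehat{\operatorname{prof}}_{R,\mathcal{P}}[u](w)=\min\{\operatorname{prof}^*_{R,\mathcal{P}}[u](w),|R|+1\}$. *)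

(* Defs.v *)
From mathcomp Require Import all_boot all_order all_algebra.
Set Implicit Arguments. Unset Strict Implicit. Unset Printing Implicit Defensive.
Import Order.TTheory GRing.Theory Num.Theory.

Section Graph.
Variables (T : finType) (e : rel T).

Definition simple_graph := symmetric e /\ irreflexive e.
Definition graph_connected := forall x y : T, connect e x y.

(* walk of length n from x to y whose internal vertices satisfy ok *)
Definition walk_ok (ok : pred T) (n : nat) (x y : T) : bool :=
  [exists p : n.-tuple T,
     [&& path e x p, last x p == y & all ok (behead (belast x p))]].

(* least length of such a walk (a shortest one has < #|T| edges); None if none *)
Definition rdist (ok : pred T) (x y : T) : option nat :=
  let n := find (fun n => walk_ok ok n x y) (iota 0 #|T|) in
  if n < #|T| then Some n else None.

(* shortest-path distance (graph assumed connected; value #|T| if unreachable) *)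
Definition dist (x y : T) : nat := odflt #|T| (rdist predT x y).

Definition distR (R : {set T}) (v : T) : nat := \big[minn/#|T|]_(y in R) dist v y.

Definition set_connected (R : {set T}) : Prop :=
  forall x y, x \in R -> y \in R ->
    connect (fun a b => [&& e a b, a \in R & b \in R]) x y.

(* distance profile prof_{R,x}[z](s) = dist(z,s) - dist(z,x) *)
Definition prof (x z s : T) : int := ((dist z s)%:Z - (dist z x)%:Z)%R.

(* paths: a path is the sequence of its vertices v^P = first, x^P = last *)
Definition is_path (P : seq T) : bool :=
  if P is v :: p then path e v p && uniq P else false.

Definition plen (P : seq T) : nat := (size P).-1.

Definition shortest_collection (R : {set T}) (Ps : seq (seq T)) : Prop :=
  (forall P, P \in Ps ->
     exists v p, [/\ P = v :: p, is_path P, last v p \in R & plen P = distR R v])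
  /\ (forall x, x \in R -> has (fun P => x \in P) Ps).

Section Collection.
Variables (R : {set T}) (Ps : seq (seq T)).

Definition pnext (P : seq T) (v : T) : T := nth v P (index v P).+1.

(* milestone (profiles are compared as functions on R) *)
Definition milestone (P : seq T) (v : T) : bool :=
  (v \in P) &&
  ((v == last v P) ||
   [exists s in R, prof (last v P) v s != prof (last v P) (pnext P v) s]).

Definition hedge (a b : T) : bool :=
  has (fun P => ((a, b) \in zip P (behead P)) || ((b, a) \in zip P (behead P))) Ps.

Definition hdeg (w : T) : nat := #|[set y | hedge w y]|.

Definition anchor (w : T) : bool :=
  (2 < hdeg w) || has (fun P => milestone P w) Ps.

Definition inU (u : T) : bool := ~~ has (fun P => u \in P) Ps.

Definition inprefix (P : seq T) (w z : T) : bool :=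
  [&& z \in P, w \in P, index z P <= index w P &
      all (fun y => ~~ anchor y)
          (take (index w P - index z P) (drop (index z P) P))].

Definition distU (u z : T) : option nat := rdist inU u z.

(* candidate values |Q_{u,z}| + |P[z,w]| *)
Definition dhat_cands (u w : T) : seq nat :=
  flatten [seq flatten [seq (if distU u z is Some d
                              then [:: d + (index w P - index z P)] else [::])
                            | z <- P & inprefix P w z]
          | P <- Ps & w \in P].

(* None stands for infinity *)
Definition dhat (u w : T) : option nat :=
  if dhat_cands u w is c :: cs then Some (\big[minn/c]_(x <- c :: cs) x) else None.

(* \hat{prof}_{R,P}[u](w) = min(prof*(w), |R|+1), with infinity capped to |R|+1 *)
Definition hprof (u w : T) : int :=
  match dhat u w with
  | None => ((#|R|.+1)%:Z)%R
  | Some d => (Num.min (d%:Z + (distR R w)%:Z - (distR R u)%:Z) (#|R|.+1)%:Z)%R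
  end.

End Collection.
End Graph.

(* Main.v *)
Require Import Defs.
From mathcomp Require Import all_boot all_order all_algebra zify.
Set Implicit Arguments. Unset Strict Implicit. Unset Printing Implicit Defensive.
Import Order.TTheory GRing.Theory Num.Theory.

Lemma walk_okP (T : finType) (e : rel T) (ok : pred T) n x y :
  reflect (exists r : seq T, [/\ size r = n, path e x r, last x r = y
                              & all ok (behead (belast x r))])
          (walk_ok e ok n x y).
Proof.
apply: (iffP existsP) => [[t /and3P[H1 /eqP H2 H3]]|[r [Hs H1 H2 H3]]].
  by exists (tval t); rewrite size_tuple.
by subst n; exists (in_tuple r); rewrite /= H1 H2 eqxx H3.
Qed.

Lemma rdist_walk (T : finType) (e : rel T) (ok : pred T) n x y :
  walk_ok e ok n x y -> n < #|T| -> exists2 m, rdist e ok x y = Some m & m <= n.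
Proof.
move=> W Hn; rewrite /rdist.
set f := find _ _.
have Hf : f <= n.
  rewrite leqNgt; apply/negP => /(before_find 0).
  by rewrite nth_iota // add0n W.
by rewrite (leq_ltn_trans Hf Hn); exists f.
Qed.

Lemma rdist_some (T : finType) (e : rel T) (ok : pred T) m x y :
  rdist e ok x y = Some m -> walk_ok e ok m x y /\ m < #|T|.
Proof.
rewrite /rdist; set f := find _ _; case: ifP => // Hf [<-]; split => //.
have : has (fun n => walk_ok e ok n x y) (iota 0 #|T|) by rewrite has_find size_iota.
by move/(nth_find 0); rewrite nth_iota.
Qed.

Lemma walk_predT (T : finType) (e : rel T) (ok : pred T) n x y :
  walk_ok e ok n x y -> walk_ok e predT n x y.
Proof.
case/walk_okP=> r [H1 H2 H3 _]; apply/walk_okP; exists r; split => //; exact: all_predT.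
Qed.

Lemma dist_le_T (T : finType) (e : rel T) x y : dist e x y <= #|T|.
Proof. by rewrite /dist /rdist; case: ifP => //= /ltnW. Qed.

Lemma dist_le_walk (T : finType) (e : rel T) n x y :
  walk_ok e predT n x y -> dist e x y <= n.
Proof.
move=> W; case: (ltnP n #|T|) => Hn.
  by case: (rdist_walk W Hn) => m Hm Hle; rewrite /dist Hm.
exact: leq_trans (dist_le_T _ _ _) Hn.
Qed.

Lemma walk_cat (T : finType) (e : rel T) a b x y z :
  walk_ok e predT a x y -> walk_ok e predT b y z -> walk_ok e predT (a + b) x z.
Proof.
case/walk_okP=> r [Hr P1 L1 _]; case/walk_okP=> r' [Hr' P2 L2 _].
apply/walk_okP; exists (r ++ r').
rewrite size_cat Hr Hr' cat_path P1 last_cat L1 P2 L2; split => //; exact: all_predT.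
Qed.

Lemma walk_edge (T : finType) (e : rel T) x y : e x y -> walk_ok e predT 1 x y.
Proof. by move=> H; apply/walk_okP; exists [:: y]; rewrite /= H. Qed.

Lemma walk_nil (T : finType) (e : rel T) x : walk_ok e predT 0 x x.
Proof. by apply/walk_okP; exists [::]. Qed.

Lemma dist_walk (T : finType) (e : rel T) x y : graph_connected e ->
  walk_ok e predT (dist e x y) x y /\ dist e x y < #|T|.
Proof.
move=> C; case/connectP: (C x y) => p Hp Hy.
move: Hy; case/shortenP: Hp => p' Hp' Hu _ Hy.
have Hs : size p' < #|T|.
  rewrite cardT; have := uniq_leq_size Hu (fun z _ => mem_enum T z); by [].
have W : walk_ok e predT (size p') x y by apply/walk_okP; exists p'; split => //; exact: all_predT.
case: (rdist_walk W Hs) => m Hm _.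
by rewrite /dist Hm /=; exact: rdist_some Hm.
Qed.

Lemma dist_tri (T : finType) (e : rel T) x y z : graph_connected e ->
  dist e x z <= dist e x y + dist e y z.
Proof.
move=> C; apply: dist_le_walk; apply: walk_cat; [exact: (dist_walk x y C).1 | exact: (dist_walk y z C).1].
Qed.

Lemma subwalk (T : finType) (e : rel T) (x0 x : T) (p : seq T) i j :
  path e x p -> i <= j -> j <= size p ->
  walk_ok e predT (j - i) (nth x0 (x :: p) i) (nth x0 (x :: p) j).
Proof.
elim: p x i j => [|y p IH] x i j /=.
  move=> _ Hij; rewrite leqn0 => /eqP Hj; subst j; move: Hij; rewrite leqn0 => /eqP ->.
  exact: walk_nil.
move=> /andP[Exy Hp].
case: i => [|i] Hij Hj.
  case: j Hij Hj => [|j] _ Hj; first exact: walk_nil.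
  have := walk_cat (walk_edge Exy) (IH y 0 j Hp (leq0n _) Hj).
  by rewrite !subn0 add1n.
case: j Hij Hj => [|j] // Hij Hj.
by rewrite subSS; apply: IH.
Qed.

Lemma my_bigmin_le (I : eqType) (r : seq I) (P : pred I) (F : I -> nat) c y :
  y \in r -> P y -> \big[minn/c]_(i <- r | P i) F i <= F y.
Proof.
elim: r => // x r IH; rewrite inE big_cons => /orP[/eqP<- ->|/IH H Py]; first exact: geq_minl.
case: ifP => _; last exact: H Py.
by have := H Py; lia.
Qed.

Lemma my_bigmin_ex (I : eqType) (r : seq I) (P : pred I) (F : I -> nat) c m :
  \big[minn/c]_(i <- r | P i) F i = m -> m = c \/ exists2 y, y \in r & (P y /\ m = F y).
Proof.
elim: r m => [|x r IH] m; first by rewrite big_nil; left.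
rewrite big_cons; set B := \big[_/_]_(_ <- r | _) _.
have HB : forall m', B = m' -> m' = c \/ exists2 y, y \in x :: r & (P y /\ m' = F y).
  move=> m' /IH [->|[y Hy HP]]; first by left.
  by right; exists y; rewrite // inE Hy orbT.
case: ifP => Px; last exact: HB.
have [H|H] : minn (F x) B = F x \/ minn (F x) B = B by lia.
  by move=> Hm; right; exists x; rewrite ?mem_head //; split => //; rewrite -Hm H.
by rewrite H; exact: HB.
Qed.

Lemma distR_le (T : finType) (e : rel T) (R : {set T}) v y :
  y \in R -> distR e R v <= dist e v y.
Proof. by move=> Hy; rewrite /distR; apply: my_bigmin_le => //; exact: mem_index_enum. Qed.

Lemma distR_ex (T : finType) (e : rel T) (R : {set T}) v sR :
  graph_connected e -> sR \in R -> exists2 r, r \in R & distR e R v = dist e v r.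
Proof.
move=> C HsR.
have := @my_bigmin_ex _ (index_enum T) (fun i => i \in R) (dist e v) #|T| (distR e R v) erefl.
case=> [H|[y _ [Hy H]]]; last by exists y.
have := distR_le e v HsR; have := (dist_walk v sR C).2; lia.
Qed.

Lemma path_inR (T : finType) (e : rel T) (R : {set T}) r p :
  path (fun a b => [&& e a b, a \in R & b \in R]) r p -> all (mem R) p.
Proof.
by elim: p r => //= a p IH r /andP[/and3P[_ _ Ha] Hp]; rewrite Ha (IH a Hp).
Qed.

Lemma distR_conn (T : finType) (e : rel T) (R : {set T}) r s :
  set_connected e R -> r \in R -> s \in R -> dist e r s < #|R|.
Proof.
move=> SC Hr Hs; case/connectP: (SC r s Hr Hs) => p Hp Hy.
move: Hy; case/shortenP: Hp => p' Hp' Hu _ Hy.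
have Hall := path_inR Hp'.
have Hsz : size (r :: p') <= #|R|.
  rewrite cardE; apply: (uniq_leq_size Hu) => z; rewrite inE mem_enum => /orP[/eqP->//|Hz].
  exact: (allP Hall).
apply: leq_ltn_trans Hsz; apply: dist_le_walk; apply/walk_okP; exists p'; split => //.
  by apply: sub_path Hp' => a b /and3P[].
exact: all_predT.
Qed.

Lemma coll_path (T : finType) (e : rel T) (R : {set T}) Ps P :
  shortest_collection e R Ps -> P \in Ps ->
  exists v q, [/\ P = v :: q, path e v q, uniq (v :: q), last v q \in R
                & size q = distR e R v].
Proof.
case=> H _ HP; case: (H P HP) => v [q [-> /= /andP[H1 H2] H3 H4]]; exists v, q; split => //.
Qed.

Lemma dist_along (T : finType) (e : rel T) (R : {set T}) v q l :
  graph_connected e -> last v q \in R -> path e v q ->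
  size q = distR e R v -> l <= size q ->
  dist e (nth v (v::q) l) (last v q) = size q - l.
Proof.
move=> C HR Hp Hs Hl.
have Hlast : nth v (v::q) (size q) = last v q by have := nth_last v (v::q).
have H1 : dist e (nth v (v::q) l) (last v q) <= size q - l.
  rewrite -Hlast; apply: dist_le_walk; exact: subwalk.
have H2 : dist e v (nth v (v::q) l) <= l.
  have := @subwalk _ e v v q 0 l Hp (leq0n _) Hl; move/dist_le_walk; by rewrite subn0.
have H3 := distR_le e v HR; have H4 := dist_tri v (nth v (v::q) l) (last v q) C.
lia.
Qed.

Lemma step_dist (T : finType) (e : rel T) (R : {set T}) Ps v q l s :
  graph_connected e -> v :: q \in Ps -> path e v q -> uniq (v::q) ->
  last v q \in R -> size q = distR e R v ->
  l < size q -> ~~ anchor e R Ps (nth v (v::q) l) -> s \in R ->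
  dist e (nth v (v::q) l) s = dist e (nth v (v::q) l.+1) s + 1.
Proof.
move=> C HP Hp Hu HR Hs Hl Ha HsR.
have Hm : ~~ milestone e R (v::q) (nth v (v::q) l).
  by move: Ha; rewrite /anchor negb_or => /andP[_ /hasPn H]; exact: H _ HP.
have Hl' : l < size (v::q) by rewrite /= ltnS ltnW.
have Hl'' : l.+1 < size (v::q) by [].
move: Hm; rewrite /milestone mem_nth // negb_or => /andP[_ /exists_inPn H].
have := H s HsR; rewrite negbK /pnext index_uniq //.
rewrite (set_nth_default v) // /prof => /eqP.
have -> : last (nth v (v :: q) l) (v :: q) = last v q by [].
rewrite (dist_along C HR) // ?ltnW // (dist_along C HR) //.
lia.
Qed.

Lemma chain_dist (T : finType) (e : rel T) (R : {set T}) Ps v q i k s :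
  graph_connected e -> v :: q \in Ps -> path e v q -> uniq (v::q) ->
  last v q \in R -> size q = distR e R v -> i + k <= size q ->
  (forall l, i <= l -> l < i + k -> ~~ anchor e R Ps (nth v (v::q) l)) -> s \in R ->
  dist e (nth v (v::q) i) s = dist e (nth v (v::q) (i + k)) s + k.
Proof.
move=> C HP Hp Hu HR Hs.
elim: k => [|k IH] Hk Hna HsR; first by rewrite !addn0.
have Hk' : i + k <= size q by rewrite addnS in Hk; exact: ltnW.
have Hna' : forall l, i <= l -> l < i + k -> ~~ anchor e R Ps (nth v (v::q) l).
  move=> l H1 H2; apply: Hna => //. rewrite addnS ltnS ltnW //.
rewrite (IH Hk' Hna' HsR).
rewrite (step_dist (l := i + k) C HP Hp Hu HR Hs) //.
- rewrite (addnS i k); lia.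
- by rewrite -addnS.
- by apply: Hna; rewrite ?leq_addr // addnS.
Qed.

Lemma all_take_find (X : Type) (a : pred X) (s : seq X) :
  all (fun y => ~~ a y) (take (find a s) s).
Proof. by elim: s => //= x s IH; case: ifP => //= ->. Qed.

Lemma dhat_le (T : finType) (e : rel T) (R : {set T}) Ps u w c :
  c \in dhat_cands e R Ps u w -> exists2 m, dhat e R Ps u w = Some m & m <= c.
Proof.
rewrite /dhat; case: (dhat_cands e R Ps u w) => [|c0 cs] // Hc.
exists (\big[minn/c0]_(x <- c0 :: cs) x) => //.
have H := my_bigmin_le (P := xpredT) (fun x : nat => x) c0 Hc isT. exact H.
Qed.

Lemma dhat_mem (T : finType) (e : rel T) (R : {set T}) Ps u w m :
  dhat e R Ps u w = Some m -> m \in dhat_cands e R Ps u w.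
Proof.
rewrite /dhat; case: (dhat_cands e R Ps u w) => [|c0 cs] //= [Hm].
case: (my_bigmin_ex Hm) => [->|[y Hy [_ ->]]] //.
exact: mem_head.
Qed.

Lemma K1 (T : finType) (e : rel T) (R : {set T}) Ps u w s m :
  graph_connected e -> shortest_collection e R Ps ->
  dhat e R Ps u w = Some m -> dist e u s <= m + dist e w s.
Proof.
move=> C SC /dhat_mem /flatten_mapP [P]; rewrite mem_filter => /andP[HwP HP].
move/flatten_mapP => [z]; rewrite mem_filter => /andP[Hpre HzP].
case Ha: (distU e Ps u z) => [a|] //; rewrite inE => /eqP ->.
case/and4P: Hpre => _ _ Hle _.
case: (coll_path SC HP) => v [q [EP Hp Hu HR Hs]]; subst P.
have Huz : dist e u z <= a.
  by case: (rdist_some Ha) => /walk_predT /dist_le_walk.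
have Hzw : dist e z w <= index w (v::q) - index z (v::q).
  rewrite -{1}(nth_index v HzP) -{1}(nth_index v HwP).
  apply: dist_le_walk; apply: subwalk => //.
  by move: (HwP); rewrite -index_mem.
have := dist_tri u z s C; have := dist_tri z w s C; lia.
Qed.

Lemma K2 (T : finType) (e : rel T) (R : {set T}) Ps u s :
  graph_connected e -> shortest_collection e R Ps ->
  inU Ps u -> s \in R ->
  exists w, exists2 m, anchor e R Ps w /\ dhat e R Ps u w = Some m
                     & m + dist e w s <= dist e u s.
Proof.
move=> C SC HuU HsR.
have HsU : ~~ inU Ps s by rewrite /inU negbK; exact: SC.2 s HsR.
case: (dist_walk u s C) => /walk_okP [p [Hsz Hp Hl _]] Hd.
pose a := fun y => ~~ inU Ps y.
have Hhas : has a p.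
  apply/hasP; exists s => //.
  have := mem_last u p; rewrite Hl inE => /orP[/eqP Hsu|//].
  by move: HsU; rewrite Hsu HuU.
have [k Ek] : exists k, find a p = k by eexists.
have Hk : k < size p by rewrite -Ek -has_find.
have [z Ez] : exists z, nth u p k = z by eexists.
have HzU : a z by rewrite -Ez -Ek; exact: nth_find.
have Htake : take k.+1 p = rcons (take k p) z by rewrite (take_nth u) // Ez.
move: Hp; rewrite -(cat_take_drop k.+1 p) cat_path Htake last_rcons => /andP[Hp1 Hp2].
move: Hl; rewrite -(cat_take_drop k.+1 p) last_cat Htake last_rcons => Hl2.
have Wpre : walk_ok e (inU Ps) k.+1 u z.
  apply/walk_okP; exists (rcons (take k p) z); split => //.
  - by rewrite size_rcons size_takel // ltnW.
  - by rewrite last_rcons.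
  - rewrite belast_rcons /=; apply/allP => y Hy.
    have := allP (all_take_find a p) y; rewrite Ek => /(_ Hy) /negbNE; done.
have [a0 Ha Hale] : exists2 a0, distU e Ps u z = Some a0 & a0 <= k.+1.
  apply: (rdist_walk Wpre); rewrite -Hsz in Hd; exact: leq_ltn_trans Hk Hd.
have Hzs : dist e z s <= size p - k.+1.
  apply: dist_le_walk; apply/walk_okP; exists (drop k.+1 p); split => //.
  - by rewrite size_drop.
  - exact: all_predT.
move: HzU; rewrite /a /inU negbK => /hasP [P HP HzP].
case: (coll_path SC HP) => v [q [EP Hp Hu HR Hs]]; subst P.
have [i Ei] : exists i, index z (v::q) = i by eexists.
have Hi : i <= size q by rewrite -Ei; move: (HzP); rewrite -index_mem.
have [f Ef] : exists f, find (anchor e R Ps) (drop i (v::q)) = f by eexists.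
have Hlast : nth v (v::q) (size q) = last v q by have := nth_last v (v::q).
have Hanc_last : anchor e R Ps (last v q).
  apply/orP; right; apply/hasP; exists (v::q) => //.
  by rewrite /milestone mem_last /= eqxx.
have Hf : f <= size q - i.
  rewrite leqNgt; apply/negP; rewrite -Ef => /(before_find v).
  by rewrite nth_drop subnKC // Hlast Hanc_last.
have Hif : i + f < size (v::q) by rewrite /= ltnS -(subnKC Hi) leq_add2l.
have Hwanc : anchor e R Ps (nth v (v::q) (i + f)).
  have Hh : has (anchor e R Ps) (drop i (v::q)) by rewrite has_find Ef size_drop ltn_subRL.
  by have := nth_find v Hh; rewrite Ef nth_drop.
have Hna : forall l, i <= l -> l < i + f -> ~~ anchor e R Ps (nth v (v::q) l).
  move=> l H1 H2; have := @before_find _ v (anchor e R Ps) (drop i (v::q)) (l - i).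
  rewrite Ef nth_drop subnKC // => H; by rewrite H // ltn_subLR.
have Hwin : nth v (v::q) (i + f) \in v :: q by exact: mem_nth.
have Hiw : index (nth v (v::q) (i + f)) (v::q) = i + f by exact: index_uniq.
have Hpre : inprefix e R Ps (v::q) (nth v (v::q) (i + f)) z.
  rewrite /inprefix HzP Hwin Hiw Ei leq_addr addKn -Ef.
  apply/and4P; split; [by [] | by [] | by [] | exact: all_take_find].
have Hc : a0 + f \in dhat_cands e R Ps u (nth v (v::q) (i + f)).
  apply/flatten_mapP; exists (v::q); first by rewrite mem_filter Hwin HP.
  apply/flatten_mapP; exists z; first by rewrite mem_filter Hpre HzP.
  by rewrite Ha Hiw Ei addKn mem_head.
case: (dhat_le Hc) => m Hm Hmle.
have Hch := chain_dist (i := i) (k := f) (s := s) C HP Hp Hu HR Hs Hif Hna HsR.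
have Ezi : nth v (v::q) i = z by rewrite -Ei nth_index.
rewrite Ezi in Hch.
exists (nth v (v::q) (i + f)), m; first by split.
have [dw Edw] : exists dw, dist e (nth v (v::q) (i + f)) s = dw by eexists.
rewrite Edw in Hch; rewrite Edw.
clear -Hmle Hale Hzs Hk Hsz Hch; lia.
Qed.

Lemma hprof_bound (T : finType) (e : rel T) (R : {set T}) sR u s :
  graph_connected e -> set_connected e R -> sR \in R -> s \in R ->
  dist e u s < distR e R u + #|R|.
Proof.
move=> C SC HsR Hs; case: (distR_ex u C HsR) => r Hr ->.
have := dist_tri u r s C; have := distR_conn SC Hr Hs; lia.
Qed.

Lemma F1 (T : finType) (e : rel T) (R : {set T}) Ps sR u w s :
  graph_connected e -> set_connected e R -> shortest_collection e R Ps ->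
  sR \in R -> s \in R ->
  ((dist e u s)%:Z - (distR e R u)%:Z
     <= hprof e R Ps u w - (distR e R w)%:Z + (dist e w s)%:Z)%R.
Proof.
move=> C SCR SC HsR Hs.
have Hb := hprof_bound u C SCR HsR Hs; have Hw := distR_le e w Hs.
rewrite /hprof; case Hd: (dhat e R Ps u w) => [m|].
  have := K1 s C SC Hd; lia.
lia.
Qed.

Lemma F2 (T : finType) (e : rel T) (R : {set T}) Ps sR u s :
  graph_connected e -> set_connected e R -> shortest_collection e R Ps ->
  sR \in R -> s \in R -> inU Ps u ->
  exists2 w, anchor e R Ps w &
  ((dist e u s)%:Z - (distR e R u)%:Z
     = hprof e R Ps u w - (distR e R w)%:Z + (dist e w s)%:Z)%R.
Proof.
move=> C SCR SC HsR Hs HU.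
case: (K2 C SC HU Hs) => w [m [Ha Hd] Hle].
exists w; first exact: Ha.
have Hb := hprof_bound u C SCR HsR Hs; have Hw := distR_le e w Hs.
have := K1 s C SC Hd.
rewrite /hprof Hd; lia.
Qed.

Lemma D_le (T : finType) (e : rel T) (R : {set T}) Ps sR u1 u2 s :
  graph_connected e -> set_connected e R -> shortest_collection e R Ps ->
  sR \in R -> s \in R -> inU Ps u2 ->
  (forall w, anchor e R Ps w -> hprof e R Ps u1 w = hprof e R Ps u2 w) ->
  ((dist e u1 s)%:Z - (distR e R u1)%:Z <= (dist e u2 s)%:Z - (distR e R u2)%:Z)%R.
Proof.
move=> C SCR SC HsR Hs HU Hh.
case: (F2 C SCR SC HsR Hs HU) => w Ha ->.
rewrite -Hh //; exact: F1 C SCR SC HsR Hs.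
Qed.

Unset Implicit Arguments.
Theorem lemma3p5 (T : finType) (e : rel T) (R : {set T}) (sR : T)
    (Ps : seq (seq T)) :
  simple_graph e -> graph_connected e ->
  set_connected e R -> sR \in R ->
  shortest_collection e R Ps ->
  forall u1 u2 : T, inU Ps u1 -> inU Ps u2 ->
  (forall w, anchor e R Ps w -> hprof e R Ps u1 w = hprof e R Ps u2 w) ->
  forall s, s \in R -> prof e sR u1 s = prof e sR u2 s.
Proof.
move=> _ C SCR HsR SC u1 u2 H1 H2 Hh s Hs.
have Hh' : forall w, anchor e R Ps w -> hprof e R Ps u2 w = hprof e R Ps u1 w.
  by move=> w Hw; rewrite Hh.
have A1 := D_le C SCR SC HsR Hs H2 Hh.
have A2 := D_le C SCR SC HsR Hs H1 Hh'.
have B1 := D_le C SCR SC HsR HsR H2 Hh.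
have B2 := D_le C SCR SC HsR HsR H1 Hh'.
rewrite /prof; lia.
Qed.
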